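(* For every $t\in\mathbb N_T$, every $m\in\mathcal M_n$ and every $\gamma\in\mathcal G$, $$\mathbb E\big[\|\bar f_t(m,\gamma,\mathbf w)-\hat f_t(m,\gamma)\|_\infty\big]\le\mathcal O(1/\sqrt n),$$ where the expectation is over $\mathbf w=(w^1,\dots,w^n)$ with $w^1,\dots,w^n$ i.i.d. with law $\mathbb P(w_t=\cdot)$.
   Context: Let $n,T\in\mathbb N$, $\mathbb N_T=\{1,\dots,T\}$, $\mathcal X,\mathcal U,\mathcal W$ finite sets, $\mathcal I(\mathcal X)=[0,1]^{\mathcal X}$, $\Delta(\mathcal X)$ the probability vectors on $\mathcal X$, $\mathcal M_n=\{m\in\Delta(\mathcal X): m(x)\in\{0,\tfrac1n,\dots,1\}\}$. For each $t$, $f_t:\mathcal X\times\mathcal U\times\mathcal W\times\mathcal I(\mathcal X)\to\mathcal X$, $\mathbb P(w_t=\cdot)$ a probability law on $\mathcal W$, and $\mathbb P(y|x,u,z)=\sum_w\mathbb 1(f_t(x,u,w,z)=y)\mathbb P(w_t=w)$. $\mathcal G$ is the set of maps $\gamma:\mathcal X\to\mathcal U$. Define $\hat f_t(z,\gamma)(y)=\sum_x z(x)\mathbb P(y|x,\gamma(x),z)$ and, for $\mathbf w=(w^1,\dots,w^n)\in\mathcal W^n$, $$\bar f_t(m,\gamma,\mathbf w)(y)=\sum_{x\in\mathcal X}\sum_{w\in\mathcal W}\mathbb 1\big(f_t(x,\gamma(x),w,m)=y\big)\,m(x)\,\frac1n\sum_{i=1}^n\mathbb 1(w^i=w),\quad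 y\in\mathcal X.$$ The data $T,\mathcal X,\mathcal U,\mathcal W,f_t$ and the noise laws do not depend on $n$; $\mathcal O(1/\sqrt n)$ denotes a quantity bounded by $C/\sqrt n$ with $C$ independent of $n$ (and of $m,\gamma$). *)

(* Defs.v *)
From HB Require Import structures.
From mathcomp Require Import all_boot all_order all_algebra.
From mathcomp Require Import reals.
Set Implicit Arguments. Unset Strict Implicit. Unset Printing Implicit Defensive.
Import Order.TTheory GRing.Theory Num.Theory.
Local Open Scope ring_scope.

Section Defs.
Variable R : realType.
Variables X U W : finType.

Definition is_prob (S : finType) (p : S -> R) : Prop :=
  (forall s, 0 <= p s) /\ \sum_(s : S) p s = 1.

(* M_n: empirical distributions of n agents *)
Definition in_Mn (n : nat) (m : X -> R) : Prop :=
  is_prob m /\ forall x, exists k : nat, (k <= n)%N /\ m x = k%:R / n%:R.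

(* f : X * U * W * I(X) -> X  (the mean-field argument is a function X -> R) *)
Definition dyn := X -> U -> W -> (X -> R) -> X.

Definition trans (f : dyn) (pw : W -> R) (y x : X) (u : U) (z : X -> R) : R :=
  \sum_(w : W) (f x u w z == y)%:R * pw w.

Definition fhat (f : dyn) (pw : W -> R) (z : X -> R) (g : X -> U) (y : X) : R :=
  \sum_(x : X) z x * trans f pw y x (g x) z.

Definition fbar (n : nat) (f : dyn) (m : X -> R) (g : X -> U)
    (ws : 'I_n -> W) (y : X) : R :=
  \sum_(x : X) \sum_(w : W)
     (f x (g x) w m == y)%:R * m x * (n%:R^-1 * \sum_(i < n) (ws i == w)%:R).

Definition supnorm (h : X -> R) : R := \big[Num.max/0]_(y : X) `|h y|.

Definition iid_expect (n : nat) (pw : W -> R) (F : ('I_n -> W) -> R) : R :=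
  \sum_(ws : {ffun 'I_n -> W}) (\prod_(i < n) pw (ws i)) * F ws.
End Defs.

(* Main.v *)
Require Import Defs.
From HB Require Import structures.
From mathcomp Require Import all_boot all_order all_algebra.
From mathcomp Require Import reals.
From mathcomp Require Import ring lra.
Import Order.TTheory GRing.Theory Num.Theory.
Local Open Scope ring_scope.

Section Aux.
Local Set Implicit Arguments.
Variables (R : realType) (W : finType) (P : W -> R) (hP : is_prob P) (n : nat).

Local Notation E := (@iid_expect R W n P).

Lemma P_ge0 v : 0 <= P v. Proof. exact: hP.1 v. Qed.
Lemma P_le1 v : P v <= 1.
Proof.
rewrite -hP.2 (bigD1 v) //= lerDl; apply: sumr_ge0 => *; exact: P_ge0.
Qed.

Lemma E_ext F G : (forall ws, F ws = G ws) -> E F = E G.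
Proof. by move=> h; apply: eq_bigr => ws _; rewrite h. Qed.

Lemma E_ge F G : (forall ws, F ws <= G ws) -> E F <= E G.
Proof.
move=> h; apply: ler_sum => ws _; apply: ler_wpM2l => //.
by apply: prodr_ge0 => i _; exact: P_ge0.
Qed.

Lemma E_add F G : E (fun ws => F ws + G ws) = E F + E G.
Proof. by rewrite /iid_expect -big_split; apply: eq_bigr => ws _; rewrite mulrDr. Qed.

Lemma E_scale c F : E (fun ws => c * F ws) = c * E F.
Proof. by rewrite /iid_expect mulr_sumr; apply: eq_bigr => ws _; rewrite mulrCA. Qed.

Lemma E_sum (I : finType) (F : I -> ('I_n -> W) -> R) :
  E (fun ws => \sum_(i : I) F i ws) = \sum_(i : I) E (F i).
Proof.
rewrite /iid_expect.
under eq_bigr do rewrite mulr_sumr.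
exact: exchange_big.
Qed.

Lemma E_prod (F : 'I_n -> W -> R) :
  E (fun ws => \prod_(i < n) F i (ws i)) = \prod_(i < n) \sum_(v : W) P v * F i v.
Proof.
rewrite bigA_distr_bigA /=; apply: eq_bigr => ws _; by rewrite big_split.
Qed.

Lemma E_const c : E (fun _ => c) = c.
Proof.
have h1 : E (fun ws => \prod_(i < n) (fun (_ : 'I_n) (_ : W) => 1 : R) i (ws i)) = 1.
  rewrite (E_prod (fun _ _ => 1)) big1 // => i _ /=.
  by under eq_bigr do rewrite mulr1; exact: hP.2.
rewrite (@E_ext _ (fun ws => c * \prod_(i < n) (fun (_ : 'I_n) (_ : W) => 1 : R) i (ws i))).
  by rewrite E_scale h1 mulr1.
by move=> ws; rewrite big1 ?mulr1.
Qed.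

Variable w : W.
Definition Z (v : W) : R := (v == w)%:R - P w.

Lemma Z_sq v : Z v * Z v <= 1.
Proof.
have h0 := P_ge0 w; have h1 := P_le1 w.
rewrite /Z; case: (v == w) => /=; nra.
Qed.

Lemma E_cross (i j : 'I_n) : i != j -> E (fun ws => Z (ws i) * Z (ws j)) = 0.
Proof.
move=> hij.
pose F k v := if k == i then Z v else if k == j then Z v else 1.
rewrite (@E_ext _ (fun ws => \prod_(k < n) F k (ws k))).
  rewrite E_prod (bigD1 i) //= /F eqxx.
  have -> : \sum_(v : W) P v * Z v = 0.
    rewrite /Z; under eq_bigr do rewrite mulrBr.
    rewrite sumrB -mulr_suml hP.2 mul1r.
    rewrite (bigD1 w) //= eqxx mulr1 big1 ?addr0 ?subrr // => v /negbTE ->.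
    by rewrite mulr0.
  by rewrite mul0r.
move=> ws; rewrite (bigD1 i) //= /F eqxx (bigD1 j) /=; last by rewrite eq_sym.
rewrite eqxx if_same big1 ?mulr1 //; by move=> k /andP [/negbTE -> /negbTE ->].
Qed.

Definition emp (ws : 'I_n -> W) : R := n%:R^-1 * \sum_(i < n) (ws i == w)%:R.

Lemma E_sq : (0 < n)%N -> E (fun ws => (emp ws - P w)^+2) <= n%:R^-1.
Proof.
move=> hn.
have hn0 : n%:R != 0 :> R by rewrite pnatr_eq0 -lt0n.
have key ws : emp ws - P w = n%:R^-1 * \sum_(i < n) Z (ws i).
  rewrite /emp /Z sumrB sumr_const card_ord mulrBr -(mulr_natr (P w)) mulrCA mulVf // mulr1.
  by [].
rewrite (@E_ext _ (fun ws => (n%:R^-1)^+2 * \sum_(i < n) \sum_(j < n) Z (ws i) * Z (ws j))); last first.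
  move=> ws; rewrite key exprMn expr2 [X in _ * X]mulr_suml; congr (_ * _).
  by apply: eq_bigr => i _; rewrite mulr_sumr.
rewrite E_scale E_sum.
have hS : \sum_(i < n) E (fun ws => \sum_(j < n) Z (ws i) * Z (ws j)) <= n%:R.
  apply: (@le_trans _ _ (\sum_(i < n) (1 : R))); last by rewrite sumr_const card_ord.
  apply: ler_sum => i _; rewrite E_sum (bigD1 i) //= big1 ?addr0.
    rewrite -(E_const 1); apply: E_ge => ws; exact: Z_sq.
  by move=> j hj; apply: E_cross; rewrite eq_sym.
have hpos : 0 <= (n%:R^-1 : R) ^+ 2 by apply: exprn_ge0; rewrite invr_ge0.
apply: le_trans (ler_wpM2l hpos hS) _.
by rewrite expr2 -mulrA mulVf // mulr1.
Qed.

Lemma E_abs : (0 < n)%N -> E (fun ws => `|emp ws - P w|) <= (Num.sqrt n%:R)^-1.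
Proof.
move=> hn.
set s := Num.sqrt n%:R.
have spos : 0 < s by rewrite sqrtr_gt0 ltr0n.
have ss : s * s = n%:R by rewrite -expr2 sqr_sqrtr // ler0n.
have upos : 0 < s^-1 by rewrite invr_gt0.
have us : s^-1 * s = 1 by rewrite mulVf // gt_eqF.
apply: le_trans (@E_ge _ (fun ws => 2^-1 * (s * (emp ws - P w)^+2 + s^-1)) _) _.
  move=> ws; set a := emp ws - P w.
  have h1 := mulr_ge0 (ltW upos) (sqr_ge0 (s * `|a| - 1)).
  have h2 : `|a| ^+ 2 = a ^+ 2 by rewrite real_normK // num_real.
  have h3 : s^-1 * (s * `|a| - 1) ^+ 2 = (s^-1 * s) * s * `|a|^+2 - 2 * (s^-1 * s) * `|a| + s^-1.
    by ring.
  rewrite us !mul1r mulr1 in h3.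
  rewrite h3 h2 in h1; lra.
rewrite E_scale E_add E_scale E_const.
have hE := E_sq hn.
have : s * E (fun ws => (emp ws - P w) ^+ 2) <= s^-1.
  apply: le_trans (ler_wpM2l (ltW spos) hE) _.
  by rewrite -ss invfM mulrA mulfV ?mul1r // gt_eqF.
lra.
Qed.

End Aux.



Theorem lemma4 (R : realType) (T : nat) (X U W : finType)
    (f : 'I_T -> dyn R X U W) (pw : 'I_T -> W -> R)
    (hpw : forall t, is_prob (pw t)) :
  exists C : R, forall (n : nat), (0 < n)%N ->
    forall (t : 'I_T) (m : X -> R) (g : X -> U), in_Mn n m ->
      iid_expect (pw t)
        (fun ws : 'I_n -> W => supnorm (fun y => fbar (f t) m g ws y - fhat (f t) (pw t) m g y))
      <= C / Num.sqrt (n%:R).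
Proof.
exists #|W|%:R => n hn t m g hm.
have hP := hpw t.
have m0 x : 0 <= m x := hm.1.1 x.
have hb (ws : 'I_n -> W) : supnorm (fun y => fbar (f t) m g ws y - fhat (f t) (pw t) m g y)
    <= \sum_(v : W) `|@emp R _ _ v ws - pw t v|.
  rewrite /supnorm; apply: (big_ind (fun z => z <= \sum_(v : W) `|@emp R _ _ v ws - pw t v|)).
  - by apply: sumr_ge0 => v _.
  - by move=> a b ha hb; rewrite ge_max ha hb.
  move=> y _.
  have -> : fbar (f t) m g ws y - fhat (f t) (pw t) m g y =
     \sum_(x : X) \sum_(v : W) (f t x (g x) v m == y)%:R * m x * (@emp R _ _ v ws - pw t v).
    rewrite /fbar /fhat /trans -sumrB; apply: eq_bigr => x _.
    rewrite mulr_sumr -sumrB; apply: eq_bigr => v _; rewrite /emp; ring.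
  apply: le_trans (ler_norm_sum _ _ _) _.
  apply: (@le_trans _ _ (\sum_(x : X) m x * \sum_(v : W) `|@emp R _ _ v ws - pw t v|)).
    apply: ler_sum => x _; apply: le_trans (ler_norm_sum _ _ _) _.
    rewrite mulr_sumr; apply: ler_sum => v _.
    rewrite !normrM (ger0_norm (m0 x)) normr_nat.
    case: (_ == _); rewrite ?mul1r ?mul0r //.
    by apply: mulr_ge0.
  by rewrite -mulr_suml hm.1.2 mul1r.
apply: le_trans (@E_ge R W (pw t) hP n _ (fun ws : 'I_n -> W => \sum_(v : W) `|@emp R _ _ v ws - pw t v|) hb) _.
rewrite (E_sum R W (pw t)).
apply: (@le_trans _ _ (\sum_(v : W) (Num.sqrt n%:R)^-1)).
  by apply: ler_sum => v _; exact: E_abs.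
rewrite sumr_const -(mulr_natl ((Num.sqrt n%:R)^-1)).
by [].
Qed.
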